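(* (1) $\mathsf{SCR}\subsetneq\mathsf{RAT}$ (every subsequence-closed relation is rational, and some rational relation is not subsequence-closed). (2) $\mathsf{SCR}\not\subseteq\mathsf{REG}$ and $\mathsf{REG}\not\subseteq\mathsf{SCR}$.
   Context: Over finite alphabets $\Sigma,\Gamma$: $u\sqsubseteq u'$ means $u$ is obtained from $u'$ by deleting some (possibly no) letters. $\mathsf{RAT}$ is the class of binary rational relations (accepted by 2-tape asynchronous finite automata, equivalently denoted by regular expressions over pairs in $(\Sigma\cup\{\varepsilon\})\times(\Gamma\cup\{\varepsilon\})$ with union, componentwise concatenation and star). $\mathsf{REG}$ is the class of binary regular relations: those $R$ for which some NFA over $\Sigma_\bot\times\Gamma_\bot$ accepts exactly $\{w_1\otimes w_2:(w_1,w_2)\in R\}$, where $w_1\otimes w_2$ is the letterwise pairing padded with a fresh symbol $\bot$ to length $\max(|w_1|,|w_2|)$. For $R\subseteq\Sigma^*\times\Gamma^*$, $R_{\sqsubseteq}=\{(u,w):u\sqsubseteq u'\text{ and }(u',w)\in R\text{ for some }u'\}$. The class of subsequence-closed relations is $\mathsf{SCR}=\{R_{\sqsubseteq}:R\in\mathsf{RAT}\}$. *)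

(* Defs.v *)
From mathcomp Require Import all_boot.
Set Implicit Arguments.
Unset Strict Implicit.
Unset Printing Implicit Defensive.

Definition brel (S G : Type) := seq S -> seq G -> Prop.

(* Regular expressions over pairs in (S u {eps}) x (G u {eps}):
   None stands for the empty word eps. *)
Inductive rexp (S G : Type) : Type :=
| RE_empty : rexp S G
| RE_atom : option S -> option G -> rexp S G
| RE_union : rexp S G -> rexp S G -> rexp S G
| RE_cat : rexp S G -> rexp S G -> rexp S G
| RE_star : rexp S G -> rexp S G.

Definition ow (T : Type) (o : option T) : seq T :=
  if o is Some x then [:: x] else [::].

Inductive rlang (S G : Type) : rexp S G -> seq S -> seq G -> Prop :=
| RL_atom a b : rlang (RE_atom a b) (ow a) (ow b)
| RL_unionl e f u w : rlang e u w -> rlang (RE_union e f) u w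
| RL_unionr e f u w : rlang f u w -> rlang (RE_union e f) u w
| RL_cat e f u1 w1 u2 w2 : rlang e u1 w1 -> rlang f u2 w2 ->
    rlang (RE_cat e f) (u1 ++ u2) (w1 ++ w2)
| RL_star_nil e : rlang (RE_star e) [::] [::]
| RL_star_cons e u1 w1 u2 w2 : rlang e u1 w1 -> rlang (RE_star e) u2 w2 ->
    rlang (RE_star e) (u1 ++ u2) (w1 ++ w2).

Definition RAT (S G : Type) (R : brel S G) : Prop :=
  exists e : rexp S G, forall u w, R u w <-> rlang e u w.

Record nfa (A : Type) := NFA {
  nfa_state : finType;
  nfa_init : pred nfa_state;
  nfa_fin : pred nfa_state;
  nfa_trans : nfa_state -> A -> nfa_state -> bool }.

Fixpoint nfa_accept_from (A : Type) (M : nfa A) (s : nfa_state M) (x : seq A)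
  : Prop :=
  match x with
  | [::] => @nfa_fin A M s
  | a :: x' => exists s', @nfa_trans A M s a s' /\ @nfa_accept_from A M s' x'
  end.

Definition nfa_accept (A : Type) (M : nfa A) (x : seq A) : Prop :=
  exists s, @nfa_init A M s /\ @nfa_accept_from A M s x.

(* Padded convolution w1 (x) w2 over Sigma_bot x Gamma_bot, with None = bot. *)
Definition conv (S G : Type) (w1 : seq S) (w2 : seq G)
  : seq (option S * option G) :=
  mkseq (fun i => (nth None (map Some w1) i, nth None (map Some w2) i))
        (maxn (size w1) (size w2)).

Definition REG (S G : finType) (R : brel S G) : Prop :=
  exists M : nfa (option S * option G),
    forall x, nfa_accept M x <-> exists w1 w2, R w1 w2 /\ x = conv w1 w2.

Definition sclose (S G : finType) (R : brel S G) : brel S G :=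
  fun u w => exists u', subseq u u' /\ R u' w.

Definition SCR (S G : finType) (R : brel S G) : Prop :=
  exists R' : brel S G, RAT R' /\ forall u w, R u w <-> sclose R' u w.

(* Main.v *)
Require Import Defs.
From mathcomp Require Import all_boot zify.
Set Implicit Arguments. Unset Strict Implicit.
Fixpoint tr (S G : Type) (e : rexp S G) : rexp S G :=
  match e with
  | RE_empty => RE_empty _ _
  | RE_atom (Some a) b => RE_union (RE_atom (Some a) b) (RE_atom None b)
  | RE_atom None b => RE_atom None b
  | RE_union e f => RE_union (tr e) (tr f)
  | RE_cat e f => RE_cat (tr e) (tr f)
  | RE_star e => RE_star (tr e)
  end.

Lemma rlang_atomE (S G : Type) a b u w :
  @rlang S G (RE_atom a b) u w -> u = ow a /\ w = ow b.
Proof. by move=> H; inversion H. Qed.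

Lemma subseq_cat_split (T : eqType) (u u1 u2 : seq T) :
  subseq u (u1 ++ u2) -> exists v1 v2, [/\ u = v1 ++ v2, subseq v1 u1 & subseq v2 u2].
Proof.
move=> /subseqP [m Hm ->].
have Ht : size (take (size u1) m) = size u1.
  by rewrite size_takel // Hm size_cat leq_addr.
exists (mask (take (size u1) m) u1), (mask (drop (size u1) m) u2).
by rewrite -{1}(cat_take_drop (size u1) m) mask_cat // !mask_subseq.
Qed.

Lemma tr_complete (S : eqType) (G : Type) (e : rexp S G) u' w :
  rlang e u' w -> forall u, subseq u u' -> rlang (tr e) u w.
Proof.
elim=> {e u' w}.
- move=> [x|] b u /=.
  + case: u => [|y [|z u]] Hs.
    * by apply: RL_unionr; apply: (RL_atom None b).
    * have : y = x by move: Hs; case: (y =P x).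
      by move=> ->; apply: RL_unionl; apply: (RL_atom (Some x) b).
    * by move: Hs; case: (y =P x).
  + by move=> /eqP ->; apply: (RL_atom None b).
- by move=> e f u w _ IH u0 H /=; apply: RL_unionl; apply: IH.
- by move=> e f u w _ IH u0 H /=; apply: RL_unionr; apply: IH.
- move=> e f u1 w1 u2 w2 _ IH1 _ IH2 u /subseq_cat_split [v1 [v2 [-> H1 H2]]] /=.
  by apply: RL_cat; [apply: IH1 | apply: IH2].
- by move=> e u; rewrite subseq0 => /eqP -> /=; apply: RL_star_nil.
- move=> e u1 w1 u2 w2 _ IH1 _ IH2 u /subseq_cat_split [v1 [v2 [-> H1 H2]]] /=.
  by apply: RL_star_cons; [apply: IH1 | apply: IH2].
Qed.

Lemma tr_sound (S : eqType) (G : Type) (e0 : rexp S G) u w :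
  rlang e0 u w -> forall e, e0 = tr e -> exists u', subseq u u' /\ rlang e u' w.
Proof.
elim=> {e0 u w}.
- move=> a b [|[x|] b'|e1 e2|e1 e2|e1] //= E; try discriminate E.
  case: E => -> ->.
  by exists [::]; split => //; apply: (RL_atom None b').
- move=> e f u w H IH [|[x|] b'|e1 e2|e1 e2|e1] //= E; try discriminate E.
  + case: E => E1 E2; subst.
    by exists u; split; [apply: subseq_refl | ].
  + case: E => E1 E2; have [u' [Hs Hr]] := IH _ E1.
    by exists u'; split => //; apply: RL_unionl.
- move=> e f u w H IH [|[x|] b'|e1 e2|e1 e2|e1] //= E; try discriminate E.
  + case: E => E1 E2; subst.
    have [-> ->] := rlang_atomE H.
    by exists [:: x]; split => //; apply: (RL_atom (Some x) b').
  + case: E => E1 E2; have [u' [Hs Hr]] := IH _ E2.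
    by exists u'; split => //; apply: RL_unionr.
- move=> e f u1 w1 u2 w2 _ IH1 _ IH2 [|[x|] b'|e1 e2|e1 e2|e1] //= E; try discriminate E.
  case: E => E1 E2.
  have [v1 [H1 R1]] := IH1 _ E1; have [v2 [H2 R2]] := IH2 _ E2.
  by exists (v1 ++ v2); split; [apply: cat_subseq | apply: RL_cat].
- move=> e [|[x|] b'|e1 e2|e1 e2|e1] //= E; try discriminate E.
  by exists [::]; split => //; apply: RL_star_nil.
- move=> e u1 w1 u2 w2 _ IH1 _ IH2 [|[x|] b'|e1 e2|e1 e2|e1] //= E; try discriminate E.
  case: E => E1.
  have [v1 [H1 R1]] := IH1 _ E1.
  have [v2 [H2 R2]] := IH2 (RE_star e1) ltac:(by rewrite /= E1).
  by exists (v1 ++ v2); split; [apply: cat_subseq | apply: RL_star_cons].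
Qed.

Lemma part1 (S G : finType) (R : brel S G) : SCR R -> RAT R.
Proof.
move=> [R' [[e He] HR]]; exists (tr e) => u w; split.
- by move=> /HR [u' [Hs /He Hr]]; apply: tr_complete Hr _ Hs.
- by move=> /tr_sound /(_ e erefl) [u' [Hs Hr]]; apply/HR; exists u'; split => //; apply/He.
Qed.
Lemma scr_nil (S G : finType) (R : brel S G) u w : SCR R -> R u w -> R [::] w.
Proof.
move=> [R' [_ HR]] /HR [u' [_ H]]; apply/HR; exists u'; split => //.
exact: sub0seq.
Qed.

Definition R0 (S G : finType) (a : S) : brel S G := fun u w => u = [:: a] /\ w = [::].

Lemma R0_RAT (S G : finType) (a : S) : RAT (@R0 S G a).
Proof.
exists (RE_atom (Some a) None) => u w; split.
- by case=> -> ->; apply: (RL_atom (Some a) None).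
- by move=> /rlang_atomE [-> ->].
Qed.

Lemma R0_notSCR (S G : finType) (a : S) : ~ SCR (@R0 S G a).
Proof. by move=> H; have [] := scr_nil H (conj erefl erefl : R0 a [:: a] [::]). Qed.

Definition M0 (S G : finType) (a : S) : nfa (option S * option G) :=
  @NFA _ bool (fun s => ~~ s) (fun s => s)
    (fun s c s' => [&& ~~ s, s' & c == (Some a, None)]).

Lemma R0_REG (S G : finType) (a : S) : REG (@R0 S G a).
Proof.
exists (M0 G a) => x; split.
- move=> [s [/= Hs Ha]]; move: Hs Ha; case: s => //= _.
  case: x => [|c [|c' x]] //=.
  + move=> [s' [/andP [_ /eqP ->] _]].
    by exists [:: a], [::]; split.
  + move=> [s' [/andP [Hs' _] [s'' [/and3P [Hn _ _] _]]]].
    by move: Hn; rewrite Hs'.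
- move=> [w1 [w2 [[-> ->] ->]]].
  exists false; split => //=.
  by exists true; split => //; rewrite /= eqxx.
Qed.

Definition step (A : Type) (M : nfa A) (X : {set nfa_state M}) (c : A) :=
  [set s' | [exists s in X, nfa_trans s c s']].
Definition reach (A : Type) (M : nfa A) (X : {set nfa_state M}) (p : seq A) := foldl (@step A M) X p.

Lemma accE (A : Type) (M : nfa A) (p q : seq A) (X : {set nfa_state M}) :
  (exists s, s \in X /\ nfa_accept_from s (p ++ q)) <->
  (exists t, t \in reach X p /\ nfa_accept_from t q).
Proof.
elim: p X => [|c p IH] X //=; rewrite -IH; split.
- move=> [s [Hs [s' [Ht Ha]]]]; exists s'; split => //.
  by rewrite inE; apply/existsP; exists s; rewrite Hs.
- move=> [s' [Hs' Ha]]; move: Hs'; rewrite inE => /existsP [s /andP [Hs Ht]].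
  by exists s; split => //; exists s'.
Qed.

Lemma nonreg (A : Type) (M : nfa A) (c1 c2 : A) :
  (forall j, nfa_accept M (nseq j c1 ++ nseq j c2)) ->
  (forall i j, i < j -> ~ nfa_accept M (nseq i c1 ++ nseq j c2)) -> False.
Proof.
move=> Hacc Hrej.
pose I : {set nfa_state M} := [set s | nfa_init s].
have accI x : nfa_accept M x <-> exists s, s \in I /\ nfa_accept_from s x.
  by split; move=> [s [Hs Ha]]; exists s; split => //; move: Hs; rewrite inE.
pose f (i : 'I_(#|{set nfa_state M}|.+1)) := reach I (nseq i c1).
have key (i j : nat) : i < j -> reach I (nseq i c1) = reach I (nseq j c1) -> False.
  move=> Hij E; apply: (Hrej i j Hij); apply/accI/accE; rewrite E.
  by apply/accE/accI.
have : ~~ injectiveb f.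
  apply/negP => /injectiveP inj; have := leq_card f inj.
  by rewrite card_ord ltnn.
move=> /injectivePn [i [j Hij E]].
rewrite /f in E; case: (ltngtP i j) => H.
- exact: key H E.
- exact: key H (esym E).
- by move: Hij; rewrite -val_eqE /= H eqxx.
Qed.

Lemma nth_map_nseq (T : Type) n (x : T) k :
  nth None (map Some (nseq n x)) k = if k < n then Some x else None.
Proof. by elim: n k => [|n IH] [|k] //=; rewrite IH. Qed.


Definition Rb (S G : finType) (a : S) (b : G) : brel S G := fun u w => exists n, u = nseq (2 * n) a /\ w = nseq n b.

Lemma rlang_catE (S G : Type) (e f : rexp S G) u w : rlang (RE_cat e f) u w ->
  exists u1 w1 u2 w2, [/\ u = u1 ++ u2, w = w1 ++ w2, rlang e u1 w1 & rlang f u2 w2].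
Proof. by move=> H; inversion H; exists u1, w1, u2, w2. Qed.

Lemma rlang_atomE' (S G : Type) a0 b0 u w :
  @rlang S G (RE_atom a0 b0) u w -> u = ow a0 /\ w = ow b0.
Proof. by move=> H; inversion H. Qed.

Definition blk (S G : finType) (a : S) (b : G) : rexp S G :=
  RE_cat (RE_atom (Some a) None) (RE_cat (RE_atom (Some a) None) (RE_atom None (Some b))).

Lemma blk_sound (S G : finType) (a : S) (b : G) e0 u w : rlang e0 u w -> e0 = RE_star (blk a b) -> Rb a b u w.
Proof.
elim; try by intros; discriminate.
+ by move=> e _; exists 0.
+ move=> e u1 w1 u2 w2 H1 _ _ IH [E]; subst e.
  have [n [-> ->]] := IH erefl.
  have [v1 [x1 [v2 [x2 [-> -> /rlang_atomE' [-> ->] H2]]]]] := rlang_catE H1.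
  have [v3 [x3 [v4 [x4 [-> -> /rlang_atomE' [-> ->] /rlang_atomE' [-> ->]]]]]] := rlang_catE H2.
  by exists n.+1; rewrite mulnS add2n.
Qed.

Lemma Rb_RAT (S G : finType) (a : S) (b : G) : RAT (Rb a b).
Proof.
exists (RE_star (blk a b)) => u w; split.
- move=> [n [-> ->]]; elim: n => [|n IH]; first exact: RL_star_nil.
  have Hb : rlang (blk a b) [:: a; a] [:: b].
    exact: (RL_cat (RL_atom (Some a) None) (RL_cat (RL_atom (Some a) None) (RL_atom None (Some b)))).
  have := RL_star_cons Hb IH.
  by rewrite mulnS add2n.
- by move=> H; apply: (blk_sound H).
Qed.

Definition Rs (S G : finType) (a : S) (b : G) := sclose (Rb a b).

Lemma Rs_SCR (S G : finType) (a : S) (b : G) : SCR (Rs a b).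
Proof. by exists (Rb a b); split; [exact: Rb_RAT|]. Qed.

Lemma Rs_notREG (S G : finType) (a : S) (b : G) : ~ REG (Rs a b).
Proof.
move=> [M HM].
pose c1 : option S * option G := (Some a, Some b).
pose c2 : option S * option G := (Some a, None).
apply: (@nonreg _ M c1 c2).
- move=> j; apply/HM; exists (nseq (2 * j) a), (nseq j b); split.
    by exists (nseq (2 * j) a); split; [exact: subseq_refl | exists j].
  apply: (@eq_from_nth _ c1).
    rewrite size_cat /conv size_mkseq !size_nseq; lia.
  move=> k; rewrite size_cat !size_nseq => Hk.
  rewrite /conv nth_mkseq ?size_nseq; last by lia.
  rewrite !nth_map_nseq nth_cat size_nseq !nth_nseq.
  have -> : k < 2 * j by lia.
  case: (ltnP k j) => Hkj //.
  by have -> : k - j < j by lia.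
- move=> i j Hij /HM [w1 [w2 [[u' [Hs [n [Hu Hw]]]] E]]].
  have Hs1 : size w1 <= 2 * n by rewrite -(size_nseq (2 * n) a) -Hu; exact: size_subseq.
  have Hsz := congr1 size E.
  rewrite size_cat !size_nseq /conv size_mkseq Hw size_nseq in Hsz.
  have Hn := congr1 (fun x => (nth c1 x i).2) E.
  rewrite /= nth_cat size_nseq ltnn subnn nth_nseq ifT in Hn; last by lia.
  rewrite /conv Hw nth_mkseq ?size_nseq in Hn; last by lia.
  rewrite nth_map_nseq /= in Hn.
  case: (ltnP i n) Hn => Hin //= _.
  lia.
Qed.

Theorem mainTheorem11 (S G : finType) :
  (* (1) SCR is included in RAT ... *)
  (forall R : brel S G, SCR R -> RAT R) /\
  (* ... strictly (needs a nonempty input alphabet) *)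
  (0 < #|S| -> exists R : brel S G, RAT R /\ ~ SCR R) /\
  (* (2) SCR is not included in REG *)
  (0 < #|S| -> 0 < #|G| -> exists R : brel S G, SCR R /\ ~ REG R) /\
  (* and REG is not included in SCR *)
  (0 < #|S| -> exists R : brel S G, REG R /\ ~ SCR R).
Proof.
split; first exact: (@part1 S G).
split; first by move=> /card_gt0P [a _]; exists (@R0 S G a); split; [exact: R0_RAT | exact: R0_notSCR].
split; last by move=> /card_gt0P [a _]; exists (@R0 S G a); split; [exact: R0_REG | exact: R0_notSCR].
move=> /card_gt0P [a _] /card_gt0P [b _].
by exists (Rs a b); split; [exact: Rs_SCR | exact: Rs_notREG].
Qed.
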